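(* Let $X_1,\dots,X_n$ be i.i.d. Bernoulli random variables with mean $p\in(0,1)$, $\overline{X}_n=\frac1n\sum_{i=1}^nX_i$, and for $z,p\in(0,1)$ let $\mathscr{M}(z,p)=\big(\frac pz\big)^z\big(\frac{1-p}{1-z}\big)^{1-z}$. Let $\varDelta=\min\Big\{\frac12,\ \frac{\mathscr{C}[z^2+(1-z)^2]}{\sqrt{nz(1-z)}}\Big\}$, where $\mathscr{C}$ is the Berry–Esseen constant. Then $$\Pr\{\overline{X}_n\le z\}\le\Big(\frac12+\varDelta\Big)[\mathscr{M}(z,p)]^n\quad\text{for }z\in(0,p),$$ $$\Pr\{\overline{X}_n\ge z\}\le\Big(\frac12+\varDelta\Big)[\mathscr{M}(z,p)]^n\quad\text{for }z\in(p,1).$$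
   Context: The Berry–Esseen constant $\mathscr{C}$ is a positive absolute constant such that for every random variable $Y$ with $\mathbb{E}[Y]=0$, $\mathbb{E}[Y^2]>0$, $\mathbb{E}[|Y|^3]<\infty$, every $n$ and every $y\in\mathbb{R}$, $|F_n(y)-\Phi(y)|\le\frac{\mathscr{C}}{\sqrt n}\frac{\mathbb{E}[|Y|^3]}{\mathbb{E}^{3/2}[Y^2]}$, where $F_n$ is the cdf of $\sum_{i=1}^nY_i/\sqrt{n\mathbb{E}[Y^2]}$ for i.i.d. copies $Y_i$ of $Y$ and $\Phi$ is the standard normal cdf. *)

(* Defs.v *)
From HB Require Import structures.
From mathcomp Require Import all_boot all_order all_algebra.
From mathcomp Require Import all_classical all_reals all_analysis.
Set Implicit Arguments. Unset Strict Implicit. Unset Printing Implicit Defensive.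
Import Order.TTheory GRing.Theory Num.Theory.
Import numFieldNormedType.Exports.
Local Open Scope classical_set_scope.
Local Open Scope ring_scope.

Section defs.
Context {R : realType}.

Definition indep_RVs d (T : measurableType d) (P : probability T R) (n : nat)
    (X : 'I_n -> {RV P >-> R}) : Prop :=
  forall B : 'I_n -> set R, (forall i, measurable (B i)) ->
    P (\bigcap_(i in [set: 'I_n]) (X i @^-1` B i)) =
    (\prod_(i < n) P (X i @^-1` B i))%E.

Definition ident_distr d (T : measurableType d) (P : probability T R) (n : nat)
    (X : 'I_n -> {RV P >-> R}) : Prop :=
  forall i j (B : set R), measurable B -> P (X i @^-1` B) = P (X j @^-1` B).

Definition bernoulli_RV d (T : measurableType d) (P : probability T R)
    (p : R) (X : {RV P >-> R}) : Prop :=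
  P (X @^-1` [set 1]) = p%:E /\ P (X @^-1` [set 0]) = (1 - p)%:E.

Definition Phi (y : R) : R := fine (normal_prob 0 1 `]-oo, y]).

Definition berry_esseen_constant (C : R) : Prop :=
  forall (d : measure_display) (T : measurableType d) (P : probability T R)
    (n : nat) (Y : 'I_n.+1 -> {RV P >-> R}),
    indep_RVs Y -> ident_distr Y ->
    ('E_P[fun w => (`|Y ord0 w| ^+ 3)%R] < +oo)%E ->
    ('E_P[Y ord0])%E = 0%E ->
    (0 < 'E_P[fun w => (Y ord0 w ^+ 2)%R])%E ->
    forall y : R,
      `| fine (P [set w | (\sum_(i < n.+1) Y i w) /
                  Num.sqrt (n.+1%:R * fine ('E_P[fun w => (Y ord0 w ^+ 2)%R])%E) <= y])
         - Phi y |
      <= C / Num.sqrt n.+1%:R * fine ('E_P[fun w => (`|Y ord0 w| ^+ 3)%R])%E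
         / (fine ('E_P[fun w => (Y ord0 w ^+ 2)%R])%E) `^ (3 / 2).

Definition Mzp (z p : R) : R := (p / z) `^ z * ((1 - p) / (1 - z)) `^ (1 - z).

Definition Delta (C : R) (n : nat) (z : R) : R :=
  Num.min (1 / 2) (C * (z ^+ 2 + (1 - z) ^+ 2) / Num.sqrt (n%:R * z * (1 - z))).

End defs.

(* Main.v *)
Require Import Defs.
From HB Require Import structures.
From mathcomp Require Import all_boot all_order all_algebra.
From mathcomp Require Import all_classical all_reals all_analysis.
From mathcomp Require Import measurable_realfun.
From mathcomp Require Import ring lra.
Import Order.TTheory GRing.Theory Num.Theory.
Import numFieldNormedType.Exports.
Local Open Scope classical_set_scope.
Local Open Scope ring_scope.
Set Implicit Arguments. Unset Strict Implicit. Unset Printing Implicit Defensive.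


Definition FS (m : nat) := {ffun 'I_m -> bool}.
HB.instance Definition _ m := Choice.on (FS m).
HB.instance Definition _ m := isPointed.Build (FS m) [ffun=> false].
HB.instance Definition _ m := @isMeasurable.Build default_measure_display
  (FS m) discrete_measurable discrete_measurable0
  discrete_measurableC discrete_measurableU.

Section fs.
Context {R : realType} (m : nat) (z : R) (z01 : 0 <= z <= 1).

Definition wz (x : FS m) : R := \prod_i (if x i then z else 1 - z).
Lemma wz_ge0 x : 0 <= wz x.
Proof. rewrite /wz; apply: prodr_ge0 => i _; case: (x i); move/andP: z01=>[]; lra. Qed.

Definition xk (k : nat) : FS m := nth [ffun=> false] (enum (FS m)) k.
Definition mk (k : nat) : {measure set (FS m) -> \bar R} :=
  mscale (NngNum (wz_ge0 (xk k))) (dirac (xk k)).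
Local Notation Qm := (msum mk #|FS m|).
Lemma QmE A : Qm A = (\sum_(x : FS m) wz x * \1_A x)%:E.
Proof.
rewrite /msum /mk /= /mscale /=.
transitivity (\sum_(k < #|FS m|) (wz (xk k) * \1_A (xk k))%:E)%E.
  by apply: eq_bigr => k _; rewrite /dirac EFinM.
rewrite sumEFin; congr EFin.
symmetry; rewrite -big_enum (big_nth [ffun=> false]) big_mkord cardE.
by [].
Qed.

Lemma sum_prod (G : 'I_m -> bool -> R) :
  \sum_(x : FS m) \prod_i G i (x i) = \prod_i \sum_(c : bool) G i c.
Proof. by rewrite bigA_distr_bigA. Qed.

Lemma QmT : Qm setT = 1%E.
Proof.
rewrite QmE; congr EFin.
under eq_bigr do rewrite indicT mulr1.
rewrite /wz (sum_prod (fun i c => if c then z else 1 - z)).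
by apply: big1 => i _; rewrite big_bool /=; ring.
Qed.

HB.instance Definition _ := Measure_isProbability.Build _ _ _ Qm QmT.
Definition Q : probability (FS m) R := Qm.

Lemma QE A : Q A = (\sum_(x : FS m) wz x * \1_A x)%:E.
Proof. exact: QmE. Qed.

Lemma mfs (D : set (FS m)) (f : FS m -> R) : measurable_fun D f.
Proof. by move=> *; exact: I. Qed.

Lemma mfse (D : set (FS m)) (f : FS m -> \bar R) : @measurable_fun _ _ (FS m) (\bar R) D f.
Proof. by move=> *; exact: I. Qed.

Lemma ge0_intQ (f : FS m -> R) : (forall x, 0 <= f x) ->
  (\int[Q]_x (f x)%:E = (\sum_(x : FS m) wz x * f x)%:E)%E.
Proof.
move=> f0.
rewrite /Q /= ge0_integral_measure_sum //; last by move=> x _; rewrite lee_fin.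
transitivity (\sum_(k < #|FS m|) (wz (xk k) * f (xk k))%:E)%E.
  apply: eq_bigr => k _; rewrite /mk ge0_integral_mscale //; last by move=> x _; rewrite lee_fin.
  rewrite integral_dirac //.
  by rewrite diracT mul1e -EFinM.
rewrite sumEFin; congr EFin.
symmetry; rewrite -big_enum (big_nth [ffun=> false]) big_mkord cardE.
by [].
Qed.

Lemma maxEFin0 (a : R) : maxe a%:E 0%E = (Num.max a 0)%:E.
Proof.
have [h|h] := leP a 0.
  by rewrite max_r ?lee_fin // max_r.
by rewrite max_l ?lee_fin ?ltW // max_l ?ltW.
Qed.

Lemma intQ (f : FS m -> R) :
  (\int[Q]_x (f x)%:E = (\sum_(x : FS m) wz x * f x)%:E)%E.
Proof.
rewrite integralE.
rewrite (eq_integral (fun x => (Num.max (f x) 0)%:E)); last first.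
  by move=> x _; rewrite funeposE maxEFin0.
rewrite [X in (_ - X)%E](eq_integral (fun x => (Num.max (- f x) 0)%:E)); last first.
  by move=> x _; rewrite funenegE /= maxEFin0.
rewrite !ge0_intQ; first last.
  by move=> x; rewrite le_max lexx orbT.
  by move=> x; rewrite le_max lexx orbT.
rewrite -EFinB -sumrB; congr EFin; apply: eq_bigr => x _.
rewrite -mulrBr; congr (_ * _).
have [h|h] := leP (f x) 0.
  rewrite (max_l (_ : 0 <= - f x)); [ring | by rewrite oppr_ge0].
rewrite (max_r (_ : - f x <= 0)); [ring | by rewrite oppr_le0 ltW].
Qed.

Definition wc (c : bool) : R := if c then z else 1 - z.

Lemma sum_coord j (g : bool -> R) :
  \sum_(x : FS m) wz x * g (x j) = \sum_(c : bool) wc c * g c.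
Proof.
transitivity (\sum_(x : FS m) \prod_i (wc (x i) * (if i == j then g (x i) else 1))).
  apply: eq_bigr => x _; rewrite big_split /= /wz.
  congr (_ * _); rewrite (bigD1 j) //= eqxx big1 ?mulr1 //.
  by move=> i /negbTE ->.
rewrite (sum_prod (fun i c => wc c * (if i == j then g c else 1))).
rewrite (bigD1 j) //= [X in _ * X]big1; last first.
  move=> i /negbTE ij; rewrite big_bool /= ij /wc; ring.
by rewrite mulr1; apply: eq_bigr => c _; rewrite eqxx.
Qed.

Lemma Q_prod (h : 'I_m -> bool -> bool) :
  Q [set x | forall i, h i (x i)] = (\prod_i \sum_(c : bool) wc c * (h i c)%:R)%:E.
Proof.
rewrite QE; congr EFin.
rewrite -(sum_prod (fun i c => wc c * (h i c)%:R)).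
apply: eq_bigr => x _; rewrite big_split /=; congr (_ * _).
case: (boolP [forall i, h i (x i)]) => H.
  rewrite indicE mem_set; last by move=> i; exact: (forallP H i).
  by rewrite big1 // => i _; rewrite (forallP H i).
move/forallPn: H => [i Hi].
rewrite indicE memNset; last by move=> /(_ i); apply/negP.
by rewrite (bigD1 i) //= (negbTE Hi) mul0r.
Qed.
End fs.

Section orig.
Context {R : realType} d (T : measurableType d) (P : probability T R).

Lemma le_measure_big (I : Type) (s : seq I) (Qp : pred I) (F : I -> set T) :
  (forall i, measurable (F i)) ->
  (P (\big[setU/set0]_(i <- s | Qp i) F i) <= \sum_(i <- s | Qp i) P (F i))%E.
Proof.
move=> mF; elim: s => [|a s IH]; first by rewrite !big_nil measure0.
rewrite !big_cons; case: (Qp a) => //.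
apply: le_trans (measureU2 _ _ _) _ => //; first exact: bigsetU_measurable.
exact: leeD.
Qed.

Lemma prodEFin (I : Type) (s : seq I) (r : I -> R) :
  (\prod_(i <- s) (r i)%:E = (\prod_(i <- s) r i)%:E)%E.
Proof. by rewrite (big_morph _ EFinM (erefl _)). Qed.

Variables (n : nat) (X : 'I_n -> {RV P >-> R}) (p : R) (p01 : 0 <= p <= 1).
Hypothesis Xindep : indep_RVs X.
Hypothesis Xbern : forall i, bernoulli_RV p (X i).

Definition Gx (x : FS n) := \bigcap_(i in [set: 'I_n]) (X i @^-1` [set ((x i : nat)%:R : R)]).

Lemma mGx x : measurable (Gx x).
Proof.
apply: fin_bigcap_measurable; first exact: finite_finset.
by move=> i _; rewrite -[_ @^-1` _]setTI; apply: measurable_funP.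
Qed.

Lemma PGx x : P (Gx x) = (wz p x)%:E.
Proof.
rewrite /Gx Xindep; last by move=> i; exact: measurable_set1.
rewrite /wz -prodEFin; apply: eq_bigr => i _.
by case: (x i); case: (Xbern i) => H1 H0.
Qed.

Definition V01 : set R := [set (0:R); 1].
Definition Good := \bigcap_(i in [set: 'I_n]) (X i @^-1` V01).

Lemma mGood : measurable Good.
Proof.
apply: fin_bigcap_measurable; first exact: finite_finset.
move=> i _; rewrite -[_ @^-1` _]setTI; apply: measurable_funP => //.
by apply: measurableU; exact: measurable_set1.
Qed.

Lemma PGood : P (~` Good) = 0%E.
Proof.
rewrite probability_setC; last exact: mGood.
rewrite /Good Xindep; last first.
  by move=> i; apply: measurableU; exact: measurable_set1.
rewrite big1 ?subee // => i _.
have -> : X i @^-1` V01 = X i @^-1` [set 0] `|` X i @^-1` [set 1].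
  by rewrite /V01 preimage_setU.
rewrite measureU; first last.
- by apply/seteqP; split => w //= [-> ]; apply/eqP; rewrite eq_sym oner_neq0.
- by rewrite -[_ @^-1` _]setTI; apply: measurable_funP => //; exact: measurable_set1.
- by rewrite -[_ @^-1` _]setTI; apply: measurable_funP => //; exact: measurable_set1.
rewrite (_ : 1%E = (1-p)%:E + p%:E)%E; last by rewrite -EFinD; congr EFin; ring.
by congr (_ + _)%E; case: (Xbern i).
Qed.

Lemma orig (E : set T) (mE : measurable E) (cond : FS n -> bool) :
  (forall w, (forall i, X i w = 0 \/ X i w = 1) -> E w -> cond [ffun i => X i w == 1]) ->
  (P E <= (\sum_(x : FS n) wz p x * (cond x)%:R)%:E)%E.
Proof.
move=> hE.
have sub : E `<=` ~` Good `|` \big[setU/set0]_(x | cond x) Gx x.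
  move=> w Ew; have [Gw|nGw] := pselect (Good w); last by left.
  right.
  have H01 : forall i, X i w = 0 \/ X i w = 1.
    by move=> i; have := Gw i I; rewrite /V01 /= => -[] ->; [left|right].
  rewrite (bigD1 [ffun i => X i w == 1]) /=; last exact: hE.
  left => i _ /=; rewrite ffunE.
  by case: (H01 i) => ->; rewrite ?eqxx // eq_sym oner_eq0.
apply: le_trans (le_measure _ _ _ sub) _.
- by rewrite inE.
- rewrite inE; apply: measurableU; first exact/measurableC/mGood.
  by apply: bigsetU_measurable => x _; exact: mGx.
apply: le_trans (measureU2 _ _ _) _.
- exact/measurableC/mGood.
- by apply: bigsetU_measurable => x _; exact: mGx.
rewrite [X in (X + _)%E](_ : _ = 0%E); last exact: PGood.
rewrite add0e; apply: le_trans (le_measure_big _ _ mGx) _.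
rewrite big_mkcond /= -sumEFin; apply: lee_sum => x _.
by case: (cond x); rewrite ?PGx ?mulr1 ?mulr0.
Qed.
End orig.

Section phi.
Context {R : realType}.
Local Notation mu := (@lebesgue_measure R).

Lemma Phi0 : Phi 0 = 1 / 2 :> R.
Proof.
rewrite /Phi /normal_prob.
set f := normal_pdf (0:R) 1.
have f0 : forall x, 0 <= f x by move=> x; exact: normal_pdf_ge0.
have cf : continuous f by apply: continuous_normal_pdf; rewrite oner_neq0.
have ev : f =1 f \o -%R.
  by move=> x; rewrite /f /= /normal_pdf oner_eq0 /normal_fun !subr0 sqrrN.
have H1 := ge0_symfun_integralT f0 cf ev.
rewrite integral_normal_pdf in H1.
have H2 : (\int[mu]_(x in `]-oo, 0%R]) (f x)%:E = \int[mu]_(x in [set x : R | (0 <= x)%R]) (f x)%:E)%E.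
  rewrite -{1}oppr0 ge0_integration_by_substitutionNy; last first.
  - by move=> x _; exact: f0.
  - exact: continuous_subspaceT.
  rewrite -set_itvcy; apply: eq_integral => x _.
  by rewrite -ev.
rewrite H2; move: H1.
case: (\int[mu]_(x in [set x : R | (0 <= x)%R]) (f x)%:E)%E => [r| |] //=.
  by move=> /eqP; rewrite -EFinM eqe => /eqP H; lra.
  by rewrite mulry gtr0_sg // mul1e.
by rewrite mulrNy gtr0_sg // mul1e.
Qed.
End phi.


Definition Yf {R : realType} (s z : R) m (i : 'I_m) (x : FS m) : R := s * ((x i : nat)%:R - z).
Lemma mYf (R : realType) (s z : R) m i : measurable_fun [set: FS m] (Yf s z i).
Proof. by move=> *; exact: I. Qed.
HB.instance Definition _ (R : realType) (s z : R) m i :=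
  isMeasurableFun.Build _ _ (FS m) R (Yf s z i) (mYf s z i).

Section be.
Context {R : realType} (C : R) (HC : berry_esseen_constant C) (n' : nat) (z : R)
  (z01 : 0 < z < 1) (s : R) (s2 : s ^+ 2 = 1).
Let N := n'.+1.
Let z01' : 0 <= z <= 1.
Proof. by case/andP: z01 => *; apply/andP; split; apply: ltW. Qed.
Let Qz := @Q R N z z01'.
Definition yv (c : bool) : R := s * ((c : nat)%:R - z).

Let Y (i : 'I_N) : {RV Qz >-> R} := [the {mfun _ >-> R} of Yf s z i].

Lemma Q1 i (B : set R) :
  Qz (Y i @^-1` B) = (\sum_(c : bool) wc z c * (yv c \in B)%:R)%:E.
Proof.
rewrite /Qz QE; congr EFin; rewrite -(sum_coord _ i (fun c => (yv c \in B)%:R)).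
by apply: eq_bigr => x _; congr (_ * _); rewrite indicE; congr (_%:R).
Qed.

Lemma Yindep : indep_RVs Y.
Proof.
move=> B mB.
rewrite (_ : \bigcap_(i in [set: 'I_N]) (Y i @^-1` B i) =
   [set x | forall i, (fun i c => yv c \in B i) i (x i)]); last first.
  apply/seteqP; split => x /= H i; first by apply/mem_set; exact: H.
  by move=> _; apply/set_mem; exact: H.
apply: (eq_trans (Q_prod z01' (fun i c => yv c \in B i))).
rewrite -prodEFin; apply: eq_bigr => i _.
by rewrite Q1.
Qed.

Lemma Yident : ident_distr Y.
Proof. by move=> i j B mB; rewrite !Q1. Qed.

Lemma EQ (f : FS N -> R) : ('E_Qz[f] = (\sum_(x : FS N) wz z x * f x)%:E)%E.
Proof. by rewrite unlock intQ. Qed.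

Lemma EQ0 (g : bool -> R) :
  ('E_Qz[fun w => g (w ord0)] = (wc z true * g true + wc z false * g false)%:E)%E.
Proof. by rewrite EQ (sum_coord _ ord0 g) big_bool. Qed.

Lemma E1 : ('E_Qz[Y ord0] = 0)%E.
Proof.
rewrite (EQ0 yv) /wc /yv /=; congr EFin; ring.
Qed.

Lemma E2 : ('E_Qz[fun w => (Y ord0 w ^+ 2)%R] = (z * (1 - z))%:E)%E.
Proof.
rewrite (EQ0 (fun c => yv c ^+ 2)) /wc /yv /=; congr EFin.
rewrite !exprMn s2; ring.
Qed.

Lemma abss : `|s| = 1.
Proof. by apply/eqP; rewrite -sqr_norm_eq1 s2. Qed.

Lemma E3 : ('E_Qz[fun w => (`|Y ord0 w| ^+ 3)%R] = (z * (1 - z) * (z ^+ 2 + (1 - z) ^+ 2))%:E)%E.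
Proof.
rewrite (EQ0 (fun c => `|yv c| ^+ 3)) /wc /yv /=; congr EFin.
case/andP: z01 => z0 z1.
rewrite !normrM abss !mul1r ger0_norm ?subr_ge0 ?ltW // ltr0_norm ?subr_lt0 //.
ring.
Qed.

Lemma BE_fin :
  \sum_(x : FS N) wz z x * ((\sum_i yv (x i) <= 0)%R : nat)%:R
  <= 1 / 2 + C * (z ^+ 2 + (1 - z) ^+ 2) / Num.sqrt (N%:R * z * (1 - z)).
Proof.
case/andP: z01 => z0 z1.
have t0 : 0 < z * (1 - z) by rewrite mulr_gt0 // subr_gt0.
have h3 : ('E_Qz[fun w => (`|Y ord0 w| ^+ 3)%R] < +oo)%E by rewrite E3 ltry.
have h2 : (0 < 'E_Qz[fun w => (Y ord0 w ^+ 2)%R])%E by rewrite E2 lte_fin.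
have := @HC _ _ Qz n' Y Yindep Yident h3 E1 h2 0.
rewrite E3 E2 /= Phi0.
rewrite [X in fine X](_ : _ = (\sum_(x : FS N) wz z x * ((\sum_i yv (x i) <= 0)%R : nat)%:R)%:E); last first.
  rewrite /Qz QE; congr EFin; apply: eq_bigr => x _; congr (_ * _).
  rewrite indicE; congr ((nat_of_bool _)%:R).
  have sq : 0 < Num.sqrt (N%:R * (z * (1 - z))).
    by rewrite sqrtr_gt0 mulr_gt0.
  apply/idP/idP => [/set_mem /=|H].
    by rewrite ler_pdivrMr // mul0r.
  by apply/mem_set => /=; rewrite ler_pdivrMr // mul0r.
rewrite /=.
set q := z ^+ 2 + (1 - z) ^+ 2.
set t := z * (1 - z).
have pw : t `^ (3 / 2) = t * Num.sqrt t.
  rewrite (_ : 3 / 2 = 1 + 2^-1); last by field.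
  rewrite powRD; last by rewrite (gt_eqF t0) implybT.
  by rewrite powRr1 ?ltW // powR12_sqrt ?ltW.
have sqN : Num.sqrt (N%:R * z * (1 - z)) = Num.sqrt N%:R * Num.sqrt t.
  by rewrite -mulrA sqrtrM.
have st : 0 < Num.sqrt t by rewrite sqrtr_gt0.
have sN : 0 < Num.sqrt (N%:R : R) by rewrite sqrtr_gt0.
have Beq : C / Num.sqrt N%:R * (t * q) / t `^ (3 / 2) = C * q / Num.sqrt (N%:R * z * (1 - z)).
  rewrite pw sqN; field.
  by rewrite !gt_eqF.
rewrite Beq => H.
have := le_trans (ler_norm _) H.
lra.
Qed.
End be.


Definition kx {R : realType} m (x : FS m) : R := \sum_i ((x i : nat)%:R).

Lemma key (R : realType) (p z : R) (hp : 0 < p < 1) (hz : 0 < z < 1) N (x : FS N) :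
  (kx x - N%:R * z) * (ln (p / z) - ln ((1 - p) / (1 - z))) <= 0 ->
  wz p x <= Mzp z p ^+ N * wz z x.
Proof.
case/andP: hp => p0 p1; case/andP: hz => z0 z1.
set a := p / z; set b := (1 - p) / (1 - z).
have a0 : 0 < a by rewrite divr_gt0.
have b0 : 0 < b by rewrite divr_gt0 // subr_gt0.
set r := fun c : bool => if c then a else b.
have r0 : forall c, 0 < r c by case.
have wzE : wz p x = wz z x * \prod_i r (x i).
  rewrite /wz -big_split; apply: eq_bigr => j _; rewrite /r /a /b.
  by case: (x j) => /=; field; rewrite ?gt_eqF ?subr_gt0 ?z1 ?z0.
have prodE : \prod_i r (x i) = expR (kx x * ln a + (N%:R - kx x) * ln b).
  transitivity (\prod_i expR (ln (r (x i)))).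
    by apply: eq_bigr => i _; rewrite lnK // posrE.
  rewrite -expR_sum; congr expR.
  transitivity (\sum_i (((x i : nat)%:R : R) * ln a + (1 - (x i : nat)%:R) * ln b)).
    by apply: eq_bigr => i _; rewrite /r; case: (x i) => /=; ring.
  rewrite big_split /= -!mulr_suml sumrB sumr_const card_ord /kx.
  done.
have ME : Mzp z p ^+ N = expR (N%:R * (z * ln a + (1 - z) * ln b)).
  rewrite /Mzp /powR !gt_eqF // -/a -/b -expRD expRM_natl.
  by congr (expR _ ^+ _); ring.
have wz0 : 0 <= wz z x by apply: wz_ge0; rewrite !ltW.
move=> H.
rewrite wzE ME prodE mulrC ler_wpM2r // ler_expR.
rewrite -subr_ge0.
have -> : N%:R * (z * ln a + (1 - z) * ln b) - (kx x * ln a + (N%:R - kx x) * ln b)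
   = - ((kx x - N%:R * z) * (ln a - ln b)) by ring.
by rewrite oppr_ge0.
Qed.

Lemma wz_sum1 (R : realType) m (z : R) : \sum_(x : FS m) wz z x = 1.
Proof.
rewrite /wz (sum_prod (fun i c => if c then z else 1 - z)).
by apply: big1 => i _; rewrite big_bool /=; ring.
Qed.

Lemma sum_yv (R : realType) (z s : R) m (x : FS m) :
  \sum_i yv z s (x i) = s * (kx x - m%:R * z).
Proof.
rewrite /yv -mulr_sumr sumrB sumr_const card_ord /kx.
by congr (_ * (_ - _)); rewrite mulr_natl.
Qed.

Lemma final (R : realType) (C : R) (HC : berry_esseen_constant C) (n' : nat)
  (p z : R) (hp : 0 < p < 1) (hz : 0 < z < 1) (s : R) (s2 : s ^+ 2 = 1)
  (cond : FS n'.+1 -> bool)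
  (hc1 : forall x, cond x -> \sum_i yv z s (x i) <= 0)
  (hc2 : forall x, cond x -> wz p x <= Mzp z p ^+ n'.+1 * wz z x) :
  \sum_x wz p x * (cond x)%:R <= (1 / 2 + Delta C n'.+1 z) * Mzp z p ^+ n'.+1.
Proof.
have S1 := BE_fin HC n' hz s2.
case/andP: hp => p0 p1; case/andP: hz => z0 z1.
have z01 : 0 <= z <= 1 by rewrite !ltW.
have M0 : 0 <= Mzp z p ^+ n'.+1.
  by rewrite exprn_ge0 // /Mzp mulr_ge0 // powR_ge0.
set ind := fun x : FS n'.+1 => (((\sum_i yv z s (x i) <= 0)%R : nat)%:R : R).
apply: (@le_trans _ _ (Mzp z p ^+ n'.+1 * \sum_x wz z x * ind x)).
  rewrite mulr_sumr; apply: ler_sum => x _.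
  case: (boolP (cond x)) => cx.
    by rewrite mulr1 /ind (hc1 x cx) mulr1 hc2.
  rewrite mulr0; apply: mulr_ge0 => //; apply: mulr_ge0; first exact: wz_ge0.
  by rewrite /ind; case: (\sum_i yv z s (x i) <= 0).
rewrite mulrC ler_wpM2r //.
have S2 : \sum_x wz z x * ind x <= 1.
  rewrite -(wz_sum1 n'.+1 z); apply: ler_sum => x _.
  rewrite /ind; case: (\sum_i yv z s (x i) <= 0); rewrite ?mulr1 ?mulr0 //; exact: wz_ge0.
rewrite /Delta -lerBlDl le_min; apply/andP; split; first by lra.
by move: S1; rewrite /ind; lra.
Qed.

Lemma mE_le (R : realType) d (T : measurableType d) (P : probability T R) n
  (X : 'I_n -> {RV P >-> R}) (z : R) (ge : bool) :
  measurable [set w | if ge then z <= n%:R^-1 * (\sum_(i < n) X i w)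
                      else n%:R^-1 * (\sum_(i < n) X i w) <= z].
Proof.
have mf : measurable_fun setT (fun w => n%:R^-1 * \sum_(i < n) X i w).
  apply: measurable_funM; first exact: measurable_cst.
  by apply: measurable_sum => i.
case: ge.
  suff <- : (fun w => n%:R^-1 * \sum_(i < n) X i w) @^-1` `[z, +oo[ =
      [set w | z <= n%:R^-1 * \sum_(i < n) X i w].
    by move: (mf measurableT _ (measurable_itv `[z, +oo[)); rewrite setTI.
  by apply/seteqP; split => w /=; rewrite in_itv /= andbT.
suff <- : (fun w => n%:R^-1 * \sum_(i < n) X i w) @^-1` `]-oo, z] =
    [set w | n%:R^-1 * \sum_(i < n) X i w <= z].
  by move: (mf measurableT _ (measurable_itv `]-oo, z])); rewrite setTI.
by apply/seteqP; split => w /=; rewrite in_itv /=.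
Qed.

Unset Implicit Arguments.
Theorem theorem6 (R : realType) (C : R) (C_gt0 : 0 < C)
    (HC : berry_esseen_constant C)
    (d : measure_display) (T : measurableType d) (P : probability T R)
    (n : nat) (n_gt0 : (0 < n)%N) (p : R) (p01 : 0 < p < 1)
    (X : 'I_n -> {RV P >-> R})
    (Xindep : indep_RVs X) (Xbern : forall i, bernoulli_RV p (X i)) (z : R) :
  (0 < z < p ->
     (P [set w | (n%:R^-1 * (\sum_(i < n) X i w) <= z)%R]
      <= ((1 / 2 + Delta C n z) * Mzp z p ^+ n)%:E)%E) /\
  (p < z < 1 ->
     (P [set w | (n%:R^-1 * (\sum_(i < n) X i w) >= z)%R]
      <= ((1 / 2 + Delta C n z) * Mzp z p ^+ n)%:E)%E).
Proof.
move: n_gt0 X Xindep Xbern; case: n => // n' _ X Xindep Xbern.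
have Npos : 0 < n'.+1%:R :> R by rewrite ltr0n.
have hX : forall w, (forall i, X i w = 0 \/ X i w = 1) ->
    \sum_(i < n'.+1) X i w = kx [ffun i => X i w == 1].
  move=> w H; apply: eq_bigr => i _; rewrite ffunE.
  by case: (H i) => ->; rewrite ?eqxx // eq_sym oner_eq0.
case/andP: (p01) => p0 p1.
split => /andP[z0 zp].
- have hz : 0 < z < 1 by rewrite z0 (lt_trans zp p1).
  have z1 : z < 1 by case/andP: hz.
  pose cond := fun x : FS n'.+1 => n'.+1%:R^-1 * kx x <= z.
  have hE : forall w, (forall i, X i w = 0 \/ X i w = 1) ->
      [set w | n'.+1%:R^-1 * (\sum_(i < n'.+1) X i w) <= z] w ->
      cond [ffun i => X i w == 1].
    by move=> w H /=; rewrite /cond -hX.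
  have mE := mE_le X z false.
  apply: le_trans (orig Xindep Xbern mE hE) _.
  rewrite lee_fin.
  have s2 : (1 : R) ^+ 2 = 1 by rewrite expr1n.
  apply: (final HC p01 hz s2).
    move=> x cx; rewrite sum_yv mul1r subr_le0.
    by rewrite -ler_pdivrMl // mulrC.
  move=> x cx; apply: key => //.
  apply: mulr_le0_ge0.
    by rewrite subr_le0 -ler_pdivrMl // mulrC.
  rewrite subr_ge0; apply: ltW; apply: (@lt_trans _ _ 0).
    by rewrite ln_lt0 // divr_gt0 ?subr_gt0 //= ltr_pdivrMr ?subr_gt0 // mul1r ltrD2l ltrN2.
  by rewrite ln_gt0 // ltr_pdivlMr // mul1r.
- have hz : 0 < z < 1 by rewrite (lt_trans p0 z0) zp.
  case/andP: (hz) => z0' z1.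
  pose cond := fun x : FS n'.+1 => z <= n'.+1%:R^-1 * kx x.
  have hE : forall w, (forall i, X i w = 0 \/ X i w = 1) ->
      [set w | z <= n'.+1%:R^-1 * (\sum_(i < n'.+1) X i w)] w ->
      cond [ffun i => X i w == 1].
    by move=> w H /=; rewrite /cond -hX.
  have mE := mE_le X z true.
  apply: le_trans (orig Xindep Xbern mE hE) _.
  rewrite lee_fin.
  have s2 : (-1 : R) ^+ 2 = 1 by rewrite sqrrN expr1n.
  apply: (final HC p01 hz s2).
    move=> x cx; rewrite sum_yv mulN1r oppr_le0 subr_ge0.
    by rewrite -ler_pdivlMl // mulrC.
  move=> x cx; apply: key => //.
  apply: mulr_ge0_le0.
    by rewrite subr_ge0 -ler_pdivlMl // mulrC.
  rewrite subr_le0; apply: ltW; apply: (@lt_trans _ _ 0).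
    by rewrite ln_lt0 // divr_gt0 //= ltr_pdivrMr // mul1r.
  by rewrite ln_gt0 // ltr_pdivlMr ?subr_gt0 // mul1r ltrD2l ltrN2.
Qed.
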